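(* Neither the unimodal spi-logic $\mathsf{SPi}+\{\iota_{wcon}\}$ nor $\mathsf{SPi}_{lin}=\mathsf{SPi}+\{p\to\Diamond p,\ \Diamond\Diamond p\to\Diamond p,\ \iota_{wcon}\}$ is complex, where $\iota_{wcon}=\big(\Diamond(p\wedge q)\wedge\Diamond(p\wedge r)\to\Diamond(p\wedge\Diamond q\wedge\Diamond r)\big)$.
   Context: Unimodal setting: one diamond $\Diamond$. Sp-formulas: built from propositional variables and $\top$ by $\wedge$ and $\Diamond$; sp-implications $\sigma\to\tau$. A SLO is an algebra $(A,\wedge,\top,\Diamond)$ with $(A,\wedge,\top)$ a meet-semilattice with top and $\Diamond$ monotone; it validates $\sigma\to\tau$ if $\sigma[\mathfrak a]\le\tau[\mathfrak a]$ for all valuations. Frames $(W,R)$ with standard Kripke semantics. $\mathsf{SPi}+\Sigma$ denotes the set of sp-implications valid in all SLOs validating $\Sigma$. For a frame $\mathfrak F=(W,R)$, $\mathfrak F^\star=(2^W,\cap,W,\Diamond^+)$ with $\Diamond^+X=\{w\mid\exists v\in X,(w,v)\in R\}$. A spi-logic $L$ is complex if every SLO validating $L$ embeds (injectively, preserving $\wedge,\top,\Diamond$) into $\mathfrak F^\star$ for some frame $\mathfrak F$ validating $L$. *)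

(* Defs.v *)
Set Implicit Arguments.

Inductive fm : Type :=
| Var : nat -> fm
| Top : fm
| And : fm -> fm -> fm
| Dia : fm -> fm.

(** An sp-implication sigma -> tau. *)
Definition spi : Type := (fm * fm)%type.

Record SLO : Type := {
  car :> Type;
  meet : car -> car -> car;
  topA : car;
  dia : car -> car;
  meet_assoc : forall a b c, meet a (meet b c) = meet (meet a b) c;
  meet_comm : forall a b, meet a b = meet b a;
  meet_idem : forall a, meet a a = a;
  meet_top : forall a, meet a topA = a;
  dia_mono : forall a b, meet a b = a -> meet (dia a) (dia b) = dia a
}.

Definition sle (A : SLO) (a b : A) : Prop := meet A a b = a.

Fixpoint evalA (A : SLO) (v : nat -> A) (s : fm) : A :=
  match s with
  | Var n => v n
  | Top => topA A
  | And s t => meet A (evalA A v s) (evalA A v t)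
  | Dia s => dia A (evalA A v s)
  end.

Definition SLO_valid (A : SLO) (i : spi) : Prop :=
  forall v : nat -> A, sle A (evalA A v (fst i)) (evalA A v (snd i)).

Definition SPi_plus (Sigma : spi -> Prop) : spi -> Prop :=
  fun i => forall A : SLO, (forall j, Sigma j -> SLO_valid A j) -> SLO_valid A i.

Record frame : Type := { world : Type; rel : world -> world -> Prop }.

Fixpoint sat (F : frame) (V : nat -> world F -> Prop) (w : world F) (s : fm)
  : Prop :=
  match s with
  | Var n => V n w
  | Top => True
  | And s t => sat F V w s /\ sat F V w t
  | Dia s => exists u, rel F w u /\ sat F V u s
  end.

Definition frame_valid (F : frame) (i : spi) : Prop :=
  forall (V : nat -> world F -> Prop) (w : world F),
    sat F V w (fst i) -> sat F V w (snd i).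

(** An embedding of the SLO A into F* = (2^W, cap, W, Diamond^+):
    an injective map preserving meet, top and diamond (subsets of W
    are predicates W -> Prop, compared extensionally). *)
Definition set_eq (W : Type) (X Y : W -> Prop) : Prop := forall w, X w <-> Y w.

Definition dia_plus (F : frame) (X : world F -> Prop) : world F -> Prop :=
  fun w => exists v, X v /\ rel F w v.

Definition embeds_into_complex (A : SLO) (F : frame) : Prop :=
  exists f : A -> (world F -> Prop),
    (forall a b, set_eq (f a) (f b) -> a = b) /\
    (forall a b, set_eq (f (meet A a b)) (fun w => f a w /\ f b w)) /\
    set_eq (f (topA A)) (fun _ => True) /\
    (forall a, set_eq (f (dia A a)) (dia_plus F (f a))).

Definition complex (L : spi -> Prop) : Prop :=
  forall A : SLO, (forall i, L i -> SLO_valid A i) ->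
    exists F : frame, (forall i, L i -> frame_valid F i) /\ embeds_into_complex A F.

Definition p : fm := Var 0.
Definition q : fm := Var 1.
Definition r : fm := Var 2.

Definition iota_wcon : spi :=
  (And (Dia (And p q)) (Dia (And p r)), Dia (And p (And (Dia q) (Dia r)))).

Definition iota_refl : spi := (p, Dia p).
Definition iota_trans : spi := (Dia (Dia p), Dia p).

Definition Sigma_wcon : spi -> Prop := fun i => i = iota_wcon.
Definition Sigma_lin : spi -> Prop :=
  fun i => i = iota_refl \/ i = iota_trans \/ i = iota_wcon.

Definition SPi_wcon : spi -> Prop := SPi_plus Sigma_wcon.
Definition SPi_lin : spi -> Prop := SPi_plus Sigma_lin.

(* Main.v *)
Require Import Defs.

Inductive E7 : Type := Z | Ea | Eb | EA | EB | Em | ET.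

Definition leb7 (x y : E7) : bool :=
  match x, y with
  | Z, _ => true
  | _, ET => true
  | Ea, Ea | Ea, EA => true
  | Eb, Eb | Eb, EB => true
  | EA, EA | EB, EB => true
  | Em, Em | Em, EA | Em, EB => true
  | _, _ => false
  end.

Definition meet7 (x y : E7) : E7 :=
  if leb7 x y then x else if leb7 y x then y else
  match x, y with
  | EA, EB | EB, EA => Em
  | _, _ => Z
  end.

Definition dia7 (x : E7) : E7 :=
  match x with
  | Ea => EA | Eb => EB | y => y
  end.

Lemma m_assoc : forall a b c, meet7 a (meet7 b c) = meet7 (meet7 a b) c.
Proof. destruct a, b, c; reflexivity. Qed.
Lemma m_comm : forall a b, meet7 a b = meet7 b a.
Proof. destruct a, b; reflexivity. Qed.
Lemma m_idem : forall a, meet7 a a = a.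
Proof. destruct a; reflexivity. Qed.
Lemma m_top : forall a, meet7 a ET = a.
Proof. destruct a; reflexivity. Qed.
Lemma d_mono : forall a b, meet7 a b = a -> meet7 (dia7 a) (dia7 b) = dia7 a.
Proof. destruct a, b; simpl; intro H; try reflexivity; discriminate. Qed.

Definition A7 : SLO := Build_SLO meet7 ET dia7 m_assoc m_comm m_idem m_top d_mono.

Lemma A7_lin : forall i, Sigma_lin i -> SLO_valid A7 i.
Proof.
  intros i [H|[H|H]]; subst; intro v; unfold sle; simpl;
  unfold p, q, r; simpl.
  - destruct (v 0); reflexivity.
  - destruct (v 0); reflexivity.
  - destruct (v 0), (v 1), (v 2); reflexivity.
Qed.

Lemma no_embed : forall F : frame, frame_valid F iota_wcon ->
  ~ embeds_into_complex A7 F.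
Proof.
  intros F HF [f [Hinj [Hm [Ht Hd]]]].
  assert (Hsub : forall w, f Em w -> f Z w).
  { intros w Hw.
    assert (H1 : f (meet7 EA EB) w) by exact Hw.
    apply Hm in H1. destruct H1 as [HA HB].
    change EA with (dia7 Ea) in HA. change EB with (dia7 Eb) in HB.
    apply Hd in HA. apply Hd in HB.
    destruct HA as [u [Hu Rwu]]. destruct HB as [v [Hv Rwv]].
    pose (V := fun n : nat => match n with
                 | 0 => fun x => f Ea x \/ f Eb x
                 | 1 => f Ea
                 | _ => f Eb end).
    specialize (HF V w).
    simpl in HF.
    destruct HF as [x [Rwx [Hx [[y [Rxy Hy]] [z [Rxz Hz]]]]]].
    - split; [exists u | exists v]; simpl; auto.
    - change Z with (dia7 Z). apply Hd. exists x. split; [|exact Rwx].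
      destruct Hx as [Hx|Hx].
      + change Z with (meet7 Ea (dia7 Eb)). apply Hm. split; [exact Hx|].
        apply Hd. exists z. auto.
      + change Z with (meet7 Eb (dia7 Ea)). apply Hm. split; [exact Hx|].
        apply Hd. exists y. auto. }
  assert (Heq : Em = Z).
  { apply Hinj. intro w. split; [apply Hsub|].
    intro Hw. assert (H2 : f (meet7 Z Em) w) by exact Hw.
    apply Hm in H2. tauto. }
  discriminate.
Qed.

Theorem theorem7p11 : ~ complex SPi_wcon /\ ~ complex SPi_lin.
Proof.
  split; intro Hc.
  - destruct (Hc A7) as [F [HF He]].
    + intros i Hi. apply Hi. intros j Hj. apply A7_lin. right; right; exact Hj.
    + apply (no_embed F); [|exact He]. apply HF. intros B HB. apply HB. reflexivity.
  - destruct (Hc A7) as [F [HF He]].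
    + intros i Hi. apply Hi. apply A7_lin.
    + apply (no_embed F); [|exact He]. apply HF. intros B HB. apply HB.
      right; right; reflexivity.
Qed.
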